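(* There is an absolute constant $C$ such that for every odd positive integer $d$ and every $\tau\in[0,d^{1/6}]$ (possibly depending on $d$), $$\int_0^\tau\frac{|H_d(t)|}{t}\,dt\le C\,d^{1/4}\,\tau\,e^{\tau^2/4}.$$
   Context: The Hermite polynomials $(H_k)_{k\ge0}$ are the orthonormal polynomials for $\mathcal{N}(0,1)$ with $\deg H_k=k$ and positive leading coefficient (the probabilist's Hermite polynomials divided by $\sqrt{k!}$). *)

(* Defs.v *)
From HB Require Import structures.
From mathcomp Require Import all_boot all_order all_algebra.
From mathcomp Require Import all_classical all_reals all_analysis.
Set Implicit Arguments. Unset Strict Implicit. Unset Printing Implicit Defensive.
Import Order.TTheory GRing.Theory Num.Theory.
Local Open Scope ring_scope.

Section Hermite.
Variable R : realType.

(* herm_pair k = (He_k, He_{k+1}) where He_k are the probabilist's Hermite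
   polynomials: He_0 = 1, He_1 = X, He_{k+2} = X He_{k+1} - (k+1) He_k. *)
Fixpoint herm_pair (k : nat) : {poly R} * {poly R} :=
  match k with
  | 0 => (1, 'X)
  | k'.+1 => let: (p, q) := herm_pair k' in (q, 'X * q - k'.+1%:R *: p)
  end.

Definition probHermite (k : nat) : {poly R} := (herm_pair k).1.

(* normalized Hermite polynomial H_k = He_k / sqrt(k!) (orthonormal for N(0,1)) *)
Definition hermite (k : nat) (t : R) : R :=
  (probHermite k).[t] / Num.sqrt (k`!)%:R.
End Hermite.

(* Main.v *)
Require Import Defs.
From HB Require Import structures.
From mathcomp Require Import all_boot all_order all_algebra.
From mathcomp Require Import all_classical all_reals all_analysis.
From mathcomp Require Import ring lra.
Import Order.TTheory GRing.Theory Num.Theory.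
Import numFieldNormedType.Exports.
Local Open Scope ring_scope.
Section Poly.
Variable R : realType.
Local Notation pH := (@probHermite R).

Lemma herm_pairE k : herm_pair R k = (pH k, pH k.+1).
Proof.
rewrite /probHermite; elim: k => [//|k IH] /=.
by rewrite IH /=.
Qed.

Lemma pH_rec k : pH k.+2 = 'X * pH k.+1 - k.+1%:R *: pH k.
Proof. by rewrite {1}/probHermite /= herm_pairE. Qed.

Lemma pH0 : pH 0 = 1. Proof. by []. Qed.
Lemma pH1 : pH 1 = 'X. Proof. by []. Qed.

Lemma pH_deriv k : (pH k)^`() = 'X * pH k - pH k.+1 /\
  (pH k.+1)^`() = k.+1%:R *: pH k.
Proof.
elim: k => [|k [IH1 IH2]].
  by rewrite pH0 pH1 derivC derivX mulr1 subrr scale1r.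
split; first by rewrite IH2 pH_rec opprB addrC subrK.
rewrite pH_rec derivB derivZ derivM derivX mul1r IH2 IH1.
rewrite -!mul_polyC !polyC_natr.
ring.
Qed.

Lemma pH_ODE n : (pH n)^`()^`() = 'X * (pH n)^`() - n%:R *: pH n.
Proof.
case: n => [|k]; first by rewrite pH0 derivC deriv0 mulr0 scale0r subr0.
have [H1 _] := pH_deriv k.+1; have [_ H2] := pH_deriv k.+1.
rewrite {1}H1 derivB derivM derivX mul1r H2.
rewrite -!mul_polyC !polyC_natr; ring.
Qed.

Lemma pH_at0 k : (pH k.+2).[0] = - k.+1%:R * (pH k).[0].
Proof. by rewrite pH_rec !hornerE; ring. Qed.

Lemma pH_odd0 m : (pH m.*2.+1).[0] = 0.
Proof.
elim: m => [|m IH]; first by rewrite pH1 hornerX.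
by rewrite doubleS pH_at0 IH mulr0.
Qed.

Lemma pH_even_bound m :
  ((pH m.*2).[0])^+4 * (m.*2.+1)%:R <= (((m.*2)`!)%:R)^+2.
Proof.
elim: m => [|m IH]; first by rewrite /= pH0 hornerC expr1n mul1r fact0 expr1n.
rewrite doubleS pH_at0 !factS !natrM.
set a := (pH m.*2).[0] in IH *; set F := ((m.*2)`!)%:R in IH *.
have a4 : 0 <= a ^+ 4 by rewrite (_ : 4 = 2 * 2)%N // exprM sqr_ge0.
set x := (m.*2.+1)%:R : R.
have hm : (m.*2.+3)%:R = x + 2 :> R by rewrite /x -addn2 natrD.
have hm2 : (m.*2.+2)%:R = x + 1 :> R by rewrite /x -addn1 natrD.
have x0 : 0 <= x by rewrite /x.
rewrite hm hm2.
have -> : (- x * a) ^+ 4 * (x + 2) = (x ^+ 3 * (x + 2)) * (a ^+ 4 * x) by ring.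
have -> : ((x + 1) * (x * F)) ^+ 2 = (x ^+ 2 * (x+1)^+2) * F ^+ 2 by ring.
apply: (le_trans (ler_wpM2l _ IH)); first by apply: mulr_ge0; [exact: exprn_ge0|lra].
rewrite ler_wpM2r ?sqr_ge0 //.
have -> : x ^+ 3 * (x + 2) = x ^+ 2 * (x * (x + 2)) by ring.
rewrite ler_wpM2l ?sqr_ge0 //.
have -> : (x + 1) ^+ 2 = x * (x + 2) + 1 by ring.
by rewrite lerDl.
Qed.
End Poly.

Section An.
Variable R : realType.

Lemma is_derive_expR_poly (q : {poly R}) (x : R) :
  is_derive x (1:R) (expR \o horner q) (expR q.[x] * q^`().[x]).
Proof.
have dq : derivable (horner q) x 1 by exact: derivable_horner.
have de : derivable expR (horner q x) 1 by exact: derivable_expR.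
apply: DeriveDef.
  apply/derivable1_diffP; apply: differentiable_comp; exact/derivable1_diffP.
rewrite -derive1E derive1_comp //.
by rewrite -derivE derive1E derive_val.
Qed.
Local Existing Instance is_derive_expR_poly.

Variables (p : {poly R}) (n : R).
Hypothesis hODE : p^`()^`() = 'X * p^`() - n *: p.
Hypothesis hp0 : p.[0] = 0.

Let lam := n + 2^-1.
Let w : {poly R} := p^`() - 2^-1 *: ('X * p).
Let L : {poly R} := lam%:P - 4^-1 *: 'X^2.
Let q2 : {poly R} := - (2^-1 *: 'X^2).
Let G : R -> R := (expR \o horner q2) * ((horner w)^+2 + horner L * (horner p)^+2).

Lemma dG x : is_derive x (1:R) G (- (x / 2) * expR q2.[x] * p.[x]^+2).
Proof.
have h := is_deriveM (is_derive_expR_poly q2 x)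
  (is_deriveD (is_deriveX 2 (is_derive_poly w x))
     (is_deriveM (is_derive_poly L x) (is_deriveX 2 (is_derive_poly p x)))).
apply: (is_derive_eq h).
rewrite /GRing.scale /= /w /L /q2.
rewrite !(derivB, derivD, derivZ, derivM, derivX, derivC, derivN, derivXn) hODE.
rewrite !fctE !(hornerD, hornerN, hornerZ, hornerM, hornerX, hornerC, hornerXn, hornerMn, hornerE_comm) /lam /=.
by field.
Qed.

Lemma G_cont : continuous G.
Proof.
move=> y.
have hd : derivable G y 1 by case: (dG y).
exact/differentiable_continuous/derivable1_diffP.
Qed.

Lemma GE c : G c = expR q2.[c] * (w.[c]^+2 + L.[c] * p.[c]^+2).
Proof. by []. Qed.

Lemma G0 : G 0 = (p^`().[0])^+2.
Proof.
rewrite GE /w /q2 !(hornerD, hornerN, hornerZ, hornerM, hornerX, hornerC, hornerXn) hp0.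
rewrite !(mulr0, oppr0, expR0, mul1r, subr0, expr0n, addr0, mul0r) /=.
by [].
Qed.

Lemma G_le {c} : 0 <= c -> G c <= G 0.
Proof.
rewrite le_eqVlt => /predU1P[<-//|c0].
have [xi xiin hx] := MVT c0 (fun x _ => dG x) (continuous_subspaceT G_cont).
rewrite -subr_le0 hx subr0.
move: xiin; rewrite in_itv /= => /andP[xi0 xic].
apply: mulr_le0_ge0; last exact: ltW.
rewrite -mulrA mulNr oppr_le0; apply: mulr_ge0; first by apply: divr_ge0 => //; exact: ltW.
by apply: mulr_ge0; [exact: ltW (expR_gt0 _)|exact: sqr_ge0].
Qed.

Let q4 : {poly R} := - (4^-1 *: 'X^2).
Let U : R -> R := (expR \o horner q4) * horner p.

Lemma dU x : is_derive x (1:R) U (expR q4.[x] * w.[x]).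
Proof.
have h := is_deriveM (is_derive_expR_poly q4 x) (is_derive_poly p x).
apply: (is_derive_eq h).
rewrite /GRing.scale /= /w /q4.
rewrite !(derivB, derivD, derivZ, derivM, derivX, derivC, derivN, derivXn).
rewrite ?fctE !(hornerD, hornerN, hornerZ, hornerM, hornerX, hornerC, hornerXn, hornerMn, hornerE_comm) /=.
by field.
Qed.

Lemma U_cont : continuous U.
Proof.
move=> y.
have hd : derivable U y 1 by case: (dU y).
exact/differentiable_continuous/derivable1_diffP.
Qed.

Lemma U_bound {x} : 0 <= x -> x^+2 <= 4 * lam -> (U x)^+2 <= (p^`().[0])^+2 * x^+2.
Proof.
have U0 : U 0 = 0.
  have -> : U 0 = expR q4.[0] * p.[0] by [].
  by rewrite hp0 mulr0.
rewrite le_eqVlt => /predU1P[<-|x0] hx.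
  by rewrite U0 !expr2 !mul0r mulr0.
have [xi xiin hxi] := MVT x0 (fun y _ => dU y) (continuous_subspaceT U_cont).
move: xiin; rewrite in_itv /= => /andP[xi0 xix].
move: hxi; rewrite U0 !subr0 => ->.
rewrite exprMn ler_wpM2r ?sqr_ge0 //.
have e2 : (expR q4.[xi])^+2 = expR q2.[xi].
  rewrite expr2 -expRD /q4 /q2 !(hornerN, hornerZ, hornerXn); congr expR; by field.
rewrite exprMn e2 -G0.
apply: (le_trans _ (G_le (ltW xi0))).
rewrite GE ler_wpM2l ?(ltW (expR_gt0 _)) // lerDl.
apply: mulr_ge0; last exact: sqr_ge0.
rewrite /L !(hornerD, hornerN, hornerZ, hornerXn, hornerC) subr_ge0.
have : xi ^+ 2 <= x ^+ 2 by rewrite lerXn2r ?ltW // ?nnegrE ?ltW.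
move: hx; rewrite /lam => hx hxi.
nra.
Qed.

Lemma P_bound x : 0 <= x -> x^+2 <= 4 * (n + 2^-1) ->
  `|p.[x]| * expR (- (x^+2 / 4)) <= `|p^`().[0]| * x.
Proof.
move=> x0 hx; have h := U_bound x0 hx.
have Ux : U x = expR (- (x^+2 / 4)) * p.[x].
  have -> : U x = expR q4.[x] * p.[x] by [].
  congr (expR _ * _); rewrite /q4 !(hornerN, hornerZ, hornerXn); by field.
rewrite Ux in h.
have E0 : 0 < expR (- (x^+2 / 4)) := expR_gt0 _.
rewrite mulrC -[expR _]ger0_norm ?(ltW E0) // -normrM.
rewrite -(ler_pXn2r (n:=2%N)) ?nnegrE ?normr_ge0 ?mulr_ge0 ?normr_ge0 //.
by rewrite exprMn !real_normK ?num_real.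
Qed.
End An.


Lemma inv_measurable (R : realType) : measurable_fun [set: R] (fun t : R => t^-1).
Proof.
rewrite -(setvU [set 0%R]).
apply/measurable_funU => //; first exact: measurableC.
split; last exact: measurable_fun_set1.
apply: measurable_realfun.open_continuous_measurable_fun.
  rewrite openC; apply: compact_closed; [exact: Rhausdorff|exact: compact_set1].
move=> x; rewrite inE /= => /eqP x0; exact: inv_continuous.
Qed.

Lemma herm_abs_measurable (R : realType) d :
  measurable_fun [set: R] (fun t : R => `|hermite d t|).
Proof.
have mp : measurable_fun [set: R] (horner (probHermite R d)).
  exact: measurable_realfun.continuous_measurable_fun (@continuous_horner R _).
have mc : measurable_fun [set: R] (cst ((Num.sqrt (d`!)%:R)^-1) : R -> R).
  exact: measurable_cst.
have mh := measurable_realfun.measurable_funM mp mc.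
have mn := measurableT_comp (@measurable_realfun.normr_measurable R setT) mh.
rewrite (_ : (fun t : R => `|hermite d t|) = (@Num.norm _ R) \o (horner (probHermite R d) \* cst ((Num.sqrt (d`!)%:R)^-1))).
  exact: mn.
by apply/funext.
Qed.

Local Open Scope classical_set_scope.

Theorem lemmaA10 (R : realType) :
  exists C : R, forall (d : nat) (tau : R),
    odd d -> 0 <= tau -> tau <= (d%:R) `^ (6%:R^-1) ->
    (\int[@lebesgue_measure R]_(t in `[0%R, tau]%classic) (`|hermite d t| / t)%:E
      <= (C * (d%:R) `^ (4%:R^-1) * tau * expR (tau ^+ 2 / 4%:R))%:E)%E.
Proof.
exists 1 => d tau hd t0 tle.
set m := d./2.
have dm : d = m.*2.+1 by rewrite -[in LHS](odd_double_half d) hd add1n.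
set p := probHermite R d.
have hODE : (p^`()^`() = 'X * p^`() - d%:R *: p)%R := pH_ODE R d.
have hp0 : p.[0] = 0 by rewrite /p dm pH_odd0.
set D := d%:R : R.
have D1 : 1 <= D by rewrite /D ler1n dm.
set D4 := D `^ 4%:R^-1.
have D4ge : 0 <= D4 := powR_ge0 _ _.
have D44 : D4 ^+ 4 = D.
  by rewrite -powR_mulrn // -powRrM mulVf ?pnatr_eq0 // powRr1 // (le_trans ler01 D1).
pose S : R := Num.sqrt (d`!)%:R.
have S0 : 0 < S by rewrite sqrtr_gt0 ltr0n fact_gt0.
pose a : R := (probHermite R m.*2).[0].
pose F : R := ((m.*2)`!)%:R.
have Dm : D = (m.*2.+1)%:R by rewrite /D dm.
have dp0 : p^`().[0] = D * a.
  have [_ h] := pH_deriv R m.*2.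
  by rewrite /p dm h hornerZ Dm.
have F0 : 0 < F by rewrite /F ltr0n fact_gt0.
have dF : (d`!)%:R = D * F :> R by rewrite Dm dm factS natrM.
have Kb : `|p^`().[0]| / S <= D4.
  rewrite -(ler_pXn2r (n:=4%N)) ?nnegrE ?divr_ge0 ?normr_ge0 ?(ltW S0) // D44.
  have S4 : S^+4 = ((d`!)%:R)^+2.
    by rewrite (_ : 4 = 2*2)%N // exprM sqr_sqrtr ?ler0n.
  have K4 : `|p^`().[0]|^+4 = (D*a)^+4.
    by rewrite (_ : 4 = 2*2)%N // !exprM real_normK ?num_real // dp0.
  have hb := pH_even_bound R m; rewrite -/a -/F -Dm in hb.
  rewrite expr_div_n K4 S4 dF ler_pdivrMr; last by rewrite exprn_gt0 // mulr_gt0 // (lt_le_trans ltr01 D1).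
  have -> : (D*a)^+4 = D^+3 * (a^+4 * D) by ring.
  have -> : D * (D*F)^+2 = D^+3 * F^+2 by ring.
  by rewrite ler_wpM2l // exprn_ge0 // (le_trans ler01 D1).
have D0 : 0 <= D by exact: le_trans ler01 D1.
have tau2 : tau^+2 <= 4 * (D + 2^-1).
  have D66 : (D `^ 6%:R^-1) ^+ 6 = D.
    by rewrite -powR_mulrn ?powR_ge0 // -powRrM mulVf ?pnatr_eq0 // powRr1.
  have t6 : tau ^+ 6 <= D.
    by rewrite -D66 lerXn2r ?nnegrE ?powR_ge0.
  case: (leP tau 1) => h.
    have : tau ^+ 2 <= 1 by rewrite expr2; nra.
    lra.
  have : tau ^+ 2 <= tau ^+ 6.
    rewrite (_ : 6 = 2 + 4)%N // exprD ler_peMr ?exprn_ge0 //.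
    by rewrite exprn_ege1 // ltW.
  lra.
have pt : forall t, 0 < t -> t <= tau -> `|hermite d t| / t <= D4 * expR (tau^+2/4).
  move=> t tpos tt.
  have ht2 : t^+2 <= tau^+2.
    by rewrite ler_pXn2r // nnegrE ltW.
  have hP := @P_bound R p D hODE hp0 t (ltW tpos) (le_trans ht2 tau2).
  set A := `|p.[t]| in hP *.
  set K := `|p^`().[0]| in hP Kb *.
  set e := expR (t^+2/4).
  have e0 : 0 < e by exact: expR_gt0.
  have hAe : A <= K * t * e.
    by move: hP; rewrite expRN -/e ler_pdivrMr.
  have hKS : K <= D4 * S by rewrite -ler_pdivrMr.
  have he : e <= expR (tau^+2/4) by rewrite ler_expR ler_wpM2r.
  rewrite /hermite -/S normrM normfV (ger0_norm (ltW S0)) -/A.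
  rewrite ler_pdivrMr // ler_pdivrMr //.
  apply: (le_trans hAe).
  rewrite (_ : D4 * expR (tau ^+ 2 / 4) * t * S = (D4 * S) * t * expR (tau ^+ 2 / 4)); last by ring.
  apply: ler_pM; [by rewrite mulr_ge0 ?normr_ge0 ?ltW|exact: ltW| |exact: he].
  by rewrite ler_pM2r.
pose M := D4 * expR (tau^+2/4).
have M0 : 0 <= M by rewrite /M mulr_ge0 // expR_ge0.
have mI : measurable (`[0%R, tau]%classic : set R) := measurable_itv _.
apply: (le_trans (ge0_le_integral (@lebesgue_measure R) mI (f2 := fun=> M%:E) _ _ (measurable_cst _) _)).
- move=> t; rewrite /= in_itv /= => /andP[t0' _]; rewrite lee_fin divr_ge0 //.
- apply/measurable_realfun.measurable_EFinP; apply: measurable_realfun.measurable_funM.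
    apply: measurable_funTS; exact: herm_abs_measurable.
  exact: measurable_funTS (inv_measurable R).
- move=> t; rewrite /= in_itv /= => /andP[t0' tt]; rewrite lee_fin.
  have [->|tn0] := eqVneq t 0; first by rewrite invr0 mulr0.
  by apply: pt => //; rewrite lt_neqAle eq_sym tn0.
rewrite integral_cst //.
have hm := lebesgue_measure_itv `[0%R, tau]%R.
rewrite /= in hm.
rewrite [X in (_ * X <= _)%E]hm.
case: ifP => _.
  rewrite -EFinD -EFinM lee_fin oppr0 addr0 /M.
  by rewrite le_eqVlt; apply/orP; left; apply/eqP; ring.
by rewrite mule0 lee_fin mul1r !mulr_ge0 // expR_ge0.
Qed.
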